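(* Let $a>0$, let $m$ be a positive integer, and let $l=(l_r,l_0,\dots,l_4)$ be a tuple of nonnegative integers with $s_l:=-l_r+\sum_{i=0}^4 l_i$. Let $f_l=r^{-l_r}x_0^{l_0}x_1^{l_1}\cdots x_4^{l_4}$ on $B_a$, and regard $r_o^m f_l$ as a function on $\tilde{B}_a=B_a\cup L$ by setting it identically zero on $L$. Then $r_o^m f_l$ is of class $C^{k-1}$ on $\tilde{B}_a$ but not of class $C^k$, where $k=\min\{m,m+s_l\}$.
   Context: On $\mathbb{R}^5$ with coordinates $x=(x_0,\dots,x_4)$ put $r=\sqrt{x_1^2+x_2^2+x_3^2+x_4^2}$, $L=\{x: r\le|x_0|\}$, $L_o=\{x: r=|x_0|\}$. Define $r_o=0$ on $L$ and $r_o=\frac{r^2-x_0^2}{r}$ on $\mathbb{R}^5\setminus L$. For $a>0$, $B_a=\{x: 0<r_o<1/a\}$ and $\tilde{B}_a=B_a\cup L$ (an open subset of $\mathbb{R}^5$). *)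

(* Defs.v *)
From HB Require Import structures.
From mathcomp Require Import all_boot all_order all_algebra.
From mathcomp Require Import all_classical all_reals all_analysis.
Set Implicit Arguments. Unset Strict Implicit. Unset Printing Implicit Defensive.
Import Order.TTheory GRing.Theory Num.Theory.
Import numFieldNormedType.Exports.
Local Open Scope classical_set_scope.
Local Open Scope ring_scope.

Section Defs.
Variable R : realType.
Notation V := 'rV[R]_5.

Definition coord (x : V) (i : 'I_5) : R := x ord0 i.

Definition rr (x : V) : R :=
  Num.sqrt (\sum_(i < 5 | i != ord0) coord x i ^+ 2).

Definition Lcone : set V := [set x | rr x <= `|coord x ord0|].

Definition ro (x : V) : R :=
  if rr x <= `|coord x ord0| then 0 else (rr x ^+ 2 - coord x ord0 ^+ 2) / rr x.

Definition Ba (a : R) : set V := [set x | 0 < ro x < a^-1].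
Definition Bt (a : R) : set V := Ba a `|` Lcone.

Definition fl (lr : nat) (l : 'I_5 -> nat) (x : V) : R :=
  rr x ^- lr * \prod_(i < 5) coord x i ^+ l i.

Definition sl (lr : nat) (l : 'I_5 -> nat) : int :=
  - (lr%:Z) + (\sum_(i < 5) (l i)%:Z).

Definition gml (m lr : nat) (l : 'I_5 -> nat) (x : V) : R :=
  if rr x <= `|coord x ord0| then 0 else ro x ^+ m * fl lr l x.

Definition ebase (i : 'I_5) : V := delta_mx ord0 i.

Definition partial (i : 'I_5) (f : V -> R) : V -> R := fun x => 'D_(ebase i) f x.

Fixpoint Ck (k : nat) (f : V -> R) (U : set V) : Prop :=
  match k with
  | 0 => forall x, U x -> {for x, continuous f}
  | k'.+1 => (forall x, U x -> differentiable f x) /\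
             forall i : 'I_5, Ck k' (partial i f) U
  end.

End Defs.

(* Main.v *)
Require Import Defs.
From HB Require Import structures.
From mathcomp Require Import all_boot all_order all_algebra.
From mathcomp Require Import all_classical all_reals all_analysis.
From mathcomp Require Import ring lra zify.
From Stdlib Require Import Lia.
Import Order.TTheory GRing.Theory Num.Theory.
Import numFieldNormedType.Exports.
Local Open Scope classical_set_scope.
Local Open Scope ring_scope.
Set Implicit Arguments. Unset Strict Implicit. Unset Printing Implicit Defensive.

Section Aux.
Variable R : realType.
Notation V := 'rV[R]_5.
Implicit Types x y z : V.
Local Notation cd := (@Defs.coord R).

Definition S x : R := \sum_(i < 5 | i != ord0) cd x i ^+ 2.
Definition Af x : R := S x - cd x ord0 ^+ 2.

Lemma S_ge0 x : 0 <= S x.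
Proof. by apply: sumr_ge0 => i _; exact: sqr_ge0. Qed.

Lemma rr_sqr x : rr x ^+ 2 = S x.
Proof. by rewrite /rr sqr_sqrtr // S_ge0. Qed.

Lemma rr_ge0 x : 0 <= rr x.
Proof. exact: sqrtr_ge0. Qed.

Lemma inLE x : (rr x <= `|cd x ord0|) = (Af x <= 0).
Proof.
by rewrite /rr -sqrtr_sqr ler_sqrt ?sqr_ge0 // subr_le0.
Qed.

Lemma coordD x y i : cd (x + y) i = cd x i + cd y i.
Proof. by rewrite /Defs.coord mxE. Qed.
Lemma coordZ (a : R) x i : cd (a *: x) i = a * cd x i.
Proof. by rewrite /Defs.coord mxE. Qed.
Lemma coordN x i : cd (- x) i = - cd x i.
Proof. by rewrite /Defs.coord mxE. Qed.
Lemma coordB x y i : cd (x - y) i = cd x i - cd y i.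
Proof. by rewrite coordD coordN. Qed.
Lemma coord0 i : cd (0 : V) i = 0.
Proof. by rewrite /Defs.coord mxE. Qed.
Lemma coord_ebase i j : cd (ebase R i) j = (i == j)%:R.
Proof. by rewrite /Defs.coord /ebase mxE eqxx eq_sym. Qed.

Lemma coord_norm x i : `|cd x i| <= `|x|.
Proof.
rewrite [X in _ <= X]mx_normrE.
exact: (le_bigmax _ (fun ij : 'I_1 * 'I_5 => `|x ij.1 ij.2|) (ord0, i)).
Qed.

Lemma norm_le x (B : R) : 0 <= B -> (forall i, `|cd x i| <= B) -> `|x| <= B.
Proof.
move=> B0 H; rewrite [X in X <= _]mx_normrE.
apply: bigmax_le => // [[a b]] _ /=; rewrite (ord1 a); exact: H.
Qed.

Lemma near_ballP (y : V) (P : V -> Prop) :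
  (\forall z \near y, P z) <-> exists2 d : R, 0 < d & forall z, `|z - y| < d -> P z.
Proof.
rewrite -nbhs_nearE nbhs_ballP; split.
  move=> [d d0 Hd]; exists d => // z zd; apply: Hd; rewrite -ball_normE /ball_ /= distrC.
  done.
move=> [d d0 Hd]; exists d => // z; rewrite -ball_normE /ball_ /= distrC; exact: Hd.
Qed.


Lemma is_derive_growth (f : V -> R) y v (l : R) :
  (forall h : R, h != 0 -> h^-1 *: (f (h *: v + y) - f y) = l) -> is_derive y v f l.
Proof.
move=> H.
have C : (fun h : R => h^-1 *: (f (h *: v + y) - f y)) @ 0^' --> l.
  apply: cvg_near_cst; near=> h; apply: H.
  near: h; exact: nbhs_dnbhs_neq.
apply: DeriveDef; first by apply/cvg_ex; exists l.
exact: cvg_lim C.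
Unshelve. all: by end_near. Qed.

Lemma is_derive_const_line (f : V -> R) y v :
  (forall h : R, f (h *: v + y) = f y) -> is_derive y v f 0.
Proof. by move=> H; apply: is_derive_growth => h _; rewrite H subrr scaler0. Qed.

Lemma is_derive_cd y v j : is_derive y v (fun z => cd z j) (cd v j).
Proof.
apply: is_derive_growth => h h0.
by rewrite coordD coordZ addrK /GRing.scale /= mulrA mulVf // mul1r.
Qed.


Lemma isD_add (f g : V -> R) y v a b : is_derive y v f a -> is_derive y v g b ->
  is_derive y v (fun z => f z + g z) (a + b).
Proof. move=> Ha Hb; exact: (is_deriveD Ha Hb). Qed.

Lemma isD_opp (f : V -> R) y v a : is_derive y v f a ->
  is_derive y v (fun z => - f z) (- a).
Proof. move=> Ha; exact: (is_deriveN Ha). Qed.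

Lemma isD_mul (f g : V -> R) y v a b : is_derive y v f a -> is_derive y v g b ->
  is_derive y v (fun z => f z * g z) (f y * b + g y * a).
Proof. move=> Ha Hb; exact: (is_deriveM Ha Hb). Qed.

Lemma isD_exp (f : V -> R) n y v a : is_derive y v f a ->
  is_derive y v (fun z => f z ^+ n) (n%:R * f y ^+ n.-1 * a).
Proof. move=> Ha; have := is_deriveX n Ha; rewrite exprfctE; exact. Qed.

Lemma isD_inv (f : V -> R) y v a : f y != 0 -> is_derive y v f a ->
  is_derive y v (fun z => (f z)^-1) (- (f y) ^- 2 * a).
Proof.
move=> fy Ha; have [df <-] := Ha.
apply: DeriveDef; first exact: derivableV.
by rewrite deriveV.
Qed.

Lemma isD_cst y v (c : R) : is_derive y v (fun _ : V => c) 0.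
Proof. exact: is_derive_cst. Qed.

Lemma isD_eq (f : V -> R) y v a b : is_derive y v f a -> a = b -> is_derive y v f b.
Proof. by move=> ? <-. Qed.

Lemma isD_ext (f g : V -> R) y v a : is_derive y v f a -> f = g -> is_derive y v g a.
Proof. by move=> ? <-. Qed.


Lemma cd_line (h : R) k y j : cd (h *: ebase R k + y) j = h * (k == j)%:R + cd y j.
Proof. by rewrite coordD coordZ coord_ebase. Qed.

Definition sg (k : 'I_5) : R := if k == ord0 then -1 else 1.
Definition Mono (a : 'I_5 -> nat) (z : V) : R := \prod_(j < 5) cd z j ^+ a j.
Definition decr (k : 'I_5) (a : 'I_5 -> nat) j := if j == k then (a j).-1 else a j.
Definition incr (k : 'I_5) (a : 'I_5 -> nat) j := if j == k then (a j).+1 else a j.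

Lemma isD_S y k : is_derive y (ebase R k) S ((k != ord0)%:R * (2 * cd y k)).
Proof.
case: (eqVneq k ord0) => [->|k0].
  apply: isD_eq; last by rewrite mul0r.
  apply: is_derive_const_line => h; rewrite /S; apply: eq_bigr => j j0.
  by rewrite cd_line eq_sym (negbTE j0) mulr0 add0r.
have -> : S = fun z => cd z k ^+ 2 + \sum_(j < 5 | (j != ord0) && (j != k)) cd z j ^+ 2.
  by apply/funext => z; rewrite /S (bigD1 k).
have H2 : is_derive y (ebase R k)
    (fun z => \sum_(j < 5 | (j != ord0) && (j != k)) cd z j ^+ 2) 0.
  apply: is_derive_const_line => h; apply: eq_bigr => j /andP[_ jk].
  by rewrite cd_line eq_sym (negbTE jk) mulr0 add0r.
have H1 := isD_exp 2 (is_derive_cd y (ebase R k) k).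
apply: isD_eq (isD_add H1 H2) _.
by rewrite coord_ebase eqxx /= expr1 mulr1 addr0 mul1r.
Qed.

Lemma isD_Af y k : is_derive y (ebase R k) Af (2 * sg k * cd y k).
Proof.
apply: isD_eq (isD_add (isD_S y k) (isD_opp (isD_exp 2 (is_derive_cd y (ebase R k) ord0)))) _.
rewrite coord_ebase /sg; case: (eqVneq k ord0) => [->|k0] /=.
  by rewrite /=; ring.
by rewrite /=; ring.
Qed.

Lemma isD_Mono y k a : is_derive y (ebase R k) (Mono a) ((a k)%:R * Mono (decr k a) y).
Proof.
have -> : Mono a = fun z => cd z k ^+ a k * \prod_(j < 5 | j != k) cd z j ^+ a j.
  by apply/funext => z; rewrite /Mono (bigD1 k).
have H2 : is_derive y (ebase R k) (fun z => \prod_(j < 5 | j != k) cd z j ^+ a j) 0.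
  apply: is_derive_const_line => h; apply: eq_bigr => j jk.
  by rewrite cd_line eq_sym (negbTE jk) mulr0 add0r.
apply: isD_eq (isD_mul (isD_exp (a k) (is_derive_cd y (ebase R k) k)) H2) _.
rewrite /Mono [in RHS](bigD1 k) //= /decr eqxx coord_ebase eqxx mulr0 add0r mulr1.
rewrite [in RHS](eq_bigr (fun j => cd y j ^+ a j)); last by move=> j /negbTE ->.
ring.
Qed.


Lemma dcd y j : differentiable (fun z : V => cd z j) y.
Proof. exact: differentiable_coord. Qed.

Lemma dD (f g : V -> R) y : differentiable f y -> differentiable g y ->
  differentiable (fun z => f z + g z) y.
Proof. move=> Hf Hg; exact: (differentiableD Hf Hg). Qed.

Lemma dN (f : V -> R) y : differentiable f y -> differentiable (fun z => - f z) y.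
Proof. move=> Hf; exact: (differentiableN Hf). Qed.

Lemma dM (f g : V -> R) y : differentiable f y -> differentiable g y ->
  differentiable (fun z => f z * g z) y.
Proof. move=> Hf Hg; exact: (differentiableM Hf Hg). Qed.

Lemma dX (f : V -> R) n y : differentiable f y -> differentiable (fun z => f z ^+ n) y.
Proof.
move=> Hf; case: n => [|n].
  have -> : (fun z => f z ^+ 0) = (fun _ => 1) by apply/funext => z; rewrite expr0.
  exact: differentiable_cst.
have H := differentiableX n Hf; rewrite exprfctE in H; exact: H.
Qed.

Lemma dV (f : V -> R) y : differentiable f y -> f y != 0 ->
  differentiable (fun z => (f z)^-1) y.
Proof. move=> Hf Hy; exact: (differentiableV Hf Hy). Qed.

Lemma dcst (c : R) y : differentiable (fun _ : V => c) y.
Proof. exact: differentiable_cst. Qed.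

Lemma dS y : differentiable S y.
Proof.
have -> : S = \sum_(i < 5) (fun z => (i != ord0)%:R * cd z i ^+ 2).
  apply/funext => z; rewrite fct_sumE /S big_mkcond; apply: eq_bigr => i _.
  by case: (i != ord0); rewrite ?mul1r ?mul0r.
apply: differentiable_sum => i; apply: dM; [exact: dcst | exact/dX/dcd].
Qed.

Lemma dAf y : differentiable Af y.
Proof. exact/dD/dN/dX/dcd/dS. Qed.

Lemma rr_gt0S y : (0 < rr y) = (0 < S y).
Proof. by rewrite /rr sqrtr_gt0. Qed.

Lemma drr y : 0 < rr y -> differentiable (@rr R) y.
Proof.
move=> ry.
have -> : @rr R = Num.sqrt \o S by [].
apply: differentiable_comp; first exact: dS.
apply/derivable1_diffP.
have := is_derive1_sqrt (x := S y); rewrite -rr_gt0S => /(_ ry) [].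
done.
Qed.

Lemma isD_rr y k : 0 < rr y ->
  is_derive y (ebase R k) (@rr R) ((k != ord0)%:R * cd y k / rr y).
Proof.
move=> ry.
have dr : derivable (@rr R) y (ebase R k) by apply: diff_derivable; exact: drr.
have H1 := isD_exp 2 (derivableP dr).
have H2 : is_derive y (ebase R k) (fun z => rr z ^+ 2) ((k != ord0)%:R * (2 * cd y k)).
  by apply: isD_ext (isD_S y k) _; apply/funext => z; rewrite rr_sqr.
have E : 2%:R * rr y ^+ 2.-1 * 'D_(ebase R k) (@rr R) y = (k != ord0)%:R * (2 * cd y k).
  by rewrite -(@derive_val _ _ _ _ _ _ _ H1) -(@derive_val _ _ _ _ _ _ _ H2).
apply: DeriveDef => //.
have r0 : rr y != 0 by rewrite gt_eqF.
apply: (mulfI (x := 2 * rr y)); first by rewrite mulf_neq0.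
rewrite expr1 in E; rewrite E; field.
done.
Qed.


Lemma dMono a y : differentiable (Mono a) y.
Proof.
have -> : Mono a = \prod_(j < 5) (fun z => cd z j ^+ a j).
  by apply/funext => z; rewrite /Mono fct_prodE.
apply: (big_ind (fun f : V -> R => differentiable f y)).
- exact: differentiable_cst.
- by move=> f g Hf Hg; exact: differentiableM.
- by move=> j _; exact/dX/dcd.
Qed.

Record term := Term { tc : R; tp : nat; tq : nat; ta : 'I_5 -> nat }.

Definition Et (t : term) z : R :=
  tc t * Af z ^+ tp t * (rr z)^-1 ^+ tq t * Mono (ta t) z.
Definition ev (t : term) z : R := if Af z <= 0 then 0 else Et t z.
Definition evl (s : seq term) z : R := \sum_(t <- s) ev t z.
Definition Etl (s : seq term) z : R := \sum_(t <- s) Et t z.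

Definition dterm (k : 'I_5) (t : term) : seq term :=
  [:: Term (tc t * (tp t)%:R * (2 * sg k)) (tp t).-1 (tq t) (incr k (ta t));
      Term (- tc t * (tq t)%:R * (k != ord0)%:R) (tp t) (tq t).+2 (incr k (ta t));
      Term (tc t * (ta t k)%:R) (tp t) (tq t) (decr k (ta t))].

Lemma Mono_incr k a y : Mono (incr k a) y = cd y k * Mono a y.
Proof.
rewrite /Mono (bigD1 k) //= [in RHS](bigD1 k) //= /incr eqxx exprS -mulrA.
congr (_ * (_ * _)); apply: eq_bigr => j /negbTE ->; done.
Qed.

Lemma dEt t y : 0 < rr y -> differentiable (Et t) y.
Proof.
move=> ry; have r0 : rr y != 0 by rewrite gt_eqF.
apply: dM; last exact: dMono.
apply: dM; first by apply: dM; [exact: dcst | exact/dX/dAf].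
by apply/dX/dV => //; exact: drr.
Qed.

Lemma isD_Et t y k : 0 < rr y ->
  is_derive y (ebase R k) (Et t) (Etl (dterm k t) y).
Proof.
move=> ry; have r0 : rr y != 0 by rewrite gt_eqF.
case: t => c p q a.
have H := isD_mul (isD_mul (isD_mul (isD_cst y (ebase R k) c) (isD_exp p (isD_Af y k)))
   (isD_exp q (isD_inv r0 (isD_rr k ry)))) (isD_Mono y k a).
apply: isD_eq H _.
rewrite /Etl !big_cons big_nil /Et /= !Mono_incr.
case: p => [|p]; case: q => [|q] /=; rewrite ?expr0 ?mulr0 ?mul0r ?addr0 ?add0r.
all: rewrite -?exprVn ?exprS ?expr0; ring.
Qed.

End Aux.

Section P3.
Variable R : realType.
Notation V := 'rV[R]_5.
Implicit Types x y z : V.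
Local Notation cd := (@Defs.coord R).

Lemma small_diff (h : V -> R) y C : h y = 0 ->
  (\forall z \near y, `|h z| <= C * `|z - y| ^+ 2) ->
  differentiable h y /\ 'd h y = 0 :> (V -> R).
Proof.
move=> hy0 /near_ballP [d d0 Hd].
have E : h \o shift y = cst (h y) + \0 +o_ (0 : V) id.
  apply/eqaddoP => eps eps0.
  have Cp : 0 < `|C| + 1 by rewrite ltr_pwDr // normr_ge0.
  apply/(near_ballP (0 : V) (fun u => `|_| <= _)).
  exists (Num.min d (eps / (`|C| + 1))); first by rewrite lt_min d0 divr_gt0.
  move=> u; rewrite subr0 lt_min => /andP[ud ue].
  rewrite /= hy0 !fctE /= addr0 subr0.
  have := Hd (u + y); rewrite addrK => /(_ ud) H.
  apply: (le_trans H).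
  have nu := normr_ge0 u.
  rewrite expr2 mulrA; apply: ler_wpM2r => //.
  apply: (le_trans (ler_wpM2r nu (ler_norm C))).
  apply: (le_trans (ler_wpM2r nu (ltW (ltr_pwDr ltr01 (lexx `|C|))))).
  by rewrite mulrC -ler_pdivlMr // ltW.
have dh : 'd h y = 0 :> (V -> R).
  apply: diff_unique => //; exact: cst_continuous.
split => //; apply/diff_locallyP; rewrite dh; split; first exact: cst_continuous.
exact: E.
Qed.

Lemma small_cont (h : V -> R) y C : h y = 0 ->
  (\forall z \near y, `|h z| <= C * `|z - y|) -> {for y, continuous h}.
Proof.
move=> hy /near_ballP [d d0 Hd].
apply/(cvgrPdist_le (FF := nbhs_filter y)) => eps eps0.
have Cp : 0 < `|C| + 1 by rewrite ltr_pwDr // normr_ge0.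
apply/(near_ballP y (fun u => `|_| <= _)).
exists (Num.min d (eps / (`|C| + 1))); first by rewrite lt_min d0 divr_gt0.
move=> z; rewrite lt_min => /andP[zd ze].
rewrite hy sub0r normrN; apply: (le_trans (Hd z zd)).
have nu := normr_ge0 (z - y).
apply: (le_trans (ler_wpM2r nu (ler_norm C))).
apply: (le_trans (ler_wpM2r nu (ltW (ltr_pwDr ltr01 (lexx `|C|))))).
by rewrite mulrC -ler_pdivlMr // ltW.
Qed.

Lemma near_eq_diff (f g : V -> R) y : (\forall z \near y, f z = g z) ->
  differentiable g y -> differentiable f y.
Proof.
move=> fg dg.
have -> : f = fun z => g z + (f z - g z) by apply/funext => z; rewrite addrC subrK.
apply: dD => //.
have [] := @small_diff (fun z => f z - g z) y 0.
- by rewrite (nbhs_singleton fg) subrr.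
- by near=> z; rewrite (near fg z) // subrr normr0 mul0r.
- by [].
Unshelve. all: by end_near. Qed.

Lemma near_Af_pos y : 0 < Af y -> \forall z \near y, 0 < Af z.
Proof.
move=> H; have C := differentiable_continuous (dAf y).
exact: (cvgr_gt _ C 0 H).
Qed.

Lemma near_Af_neg y : Af y < 0 -> \forall z \near y, Af z < 0.
Proof.
move=> H; have C := differentiable_continuous (dAf y).
exact: (cvgr_lt _ C 0 H).
Qed.


Lemma Mono_bound a z (B : R) : 0 <= B -> (forall j, `|cd z j| <= B) ->
  `|Mono a z| <= B ^+ (\sum_(j < 5) a j).
Proof.
move=> B0 H; rewrite /Mono normr_prod -prodrXr; apply: ler_prod => j _.
rewrite normr_ge0 normrX /=; apply: lerXn2r; rewrite ?inE ?nnegrE ?normr_ge0 //.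
Qed.

Lemma Et_norm t z : `|Et t z| =
  `|tc t| * `|Af z| ^+ tp t * (rr z)^-1 ^+ tq t * `|Mono (ta t) z|.
Proof.
by rewrite /Et !normrM !normrX normfV (ger0_norm (rr_ge0 z)).
Qed.

Lemma sq_diff (a b : R) : `|a ^+ 2 - b ^+ 2| <= `|a - b| * (`|a| + `|b|).
Proof.
have -> : a ^+ 2 - b ^+ 2 = (a - b) * (a + b) by ring.
by rewrite normrM ler_wpM2l // ler_normD.
Qed.

Lemma coord_le_rr z i : i != ord0 -> `|cd z i| <= rr z.
Proof.
move=> i0; rewrite -sqrtr_sqr /rr; apply: ler_wsqrtr.
rewrite (bigD1 i) //= lerDl; apply: sumr_ge0 => j _; exact: sqr_ge0.
Qed.

Lemma coord0_lt_rr z : 0 < Af z -> `|cd z ord0| < rr z.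
Proof. by move=> H; rewrite ltNge inLE -ltNge. Qed.

Lemma S_le_sum z : S z <= \sum_(i < 5) cd z i ^+ 2.
Proof.
rewrite /S big_mkcond /=; apply: ler_sum => i _.
by case: (i != ord0) => //; exact: sqr_ge0.
Qed.

Lemma rr_gt0 z : 0 < Af z -> 0 < rr z.
Proof. move=> H; apply: le_lt_trans (coord0_lt_rr H); exact: normr_ge0. Qed.

Lemma sq_le (a b : R) : 0 <= a -> 0 <= b -> a ^+ 2 <= b ^+ 2 -> a <= b.
Proof. by move=> a0 b0; rewrite ler_pXn2r // ?inE ?nnegrE. Qed.


Lemma bound_origin t y N : (N <= tp t)%N ->
  (tq t + N <= 2 * tp t + \sum_(j < 5) ta t j)%N ->
  (forall i, cd y i = 0) ->
  \forall z \near y, `|ev t z| <= (`|tc t| * 9 ^+ tp t) * `|z - y| ^+ N.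
Proof.
move=> hN hq y0.
apply/(near_ballP y (fun z => _ <= _)); exists 1 => // z zy.
set n := `|z - y|.
have n0 : 0 <= n := normr_ge0 _.
have Cn : 0 <= `|tc t| * 9 ^+ tp t * n ^+ N by rewrite !mulr_ge0 ?exprn_ge0.
rewrite /ev; case: ifP => [_|/negbT]; first by rewrite normr0.
rewrite -ltNge => Afz.
have cz i : cd z i = cd (z - y) i by rewrite coordB y0 subr0.
have hz i : `|cd z i| <= n by rewrite cz; exact: coord_norm.
have rz := rr_gt0 Afz.
have nX : n <= rr z.
  apply: norm_le; first exact: rr_ge0.
  move=> i; rewrite -cz; case: (eqVneq i ord0) => [->|i0].
    exact: ltW (coord0_lt_rr Afz).
  exact: coord_le_rr.
have X3 : rr z <= 3 * n.
  apply: sq_le; rewrite ?rr_ge0 ?mulr_ge0 //.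
  rewrite rr_sqr; apply: (le_trans (S_le_sum z)).
  apply: (@le_trans _ _ (\sum_(i < 5) n ^+ 2)).
    apply: ler_sum => i _; rewrite -real_normK ?num_real //.
    by apply: lerXn2r; rewrite ?inE ?nnegrE ?normr_ge0.
  rewrite sumr_const card_ord -mulr_natr; nra.
rewrite Et_norm.
set Y := n; set X := rr z; set c := `|tc t|; set p := tp t; set q := tq t.
set sA := \sum_(j < 5) ta t j.
have Y1 : Y <= 1 by exact: ltW.
have hA : `|Af z| <= 9 * Y ^+ 2.
  rewrite ger0_norm ?(ltW Afz) //.
  apply: (@le_trans _ _ (X ^+ 2)).
    by rewrite /X rr_sqr /Af; have := sqr_ge0 (cd z ord0); lra.
  have X0 : 0 <= X by exact: rr_ge0.
  have -> : 9 * Y ^+ 2 = (3 * Y) ^+ 2 by ring.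
  by apply: lerXn2r => //; rewrite ?inE ?nnegrE ?mulr_ge0.
have hM : `|Mono (ta t) z| <= Y ^+ sA by apply: Mono_bound.
have e1 : `|Af z| ^+ p * `|Mono (ta t) z| <= 9 ^+ p * Y ^+ (2 * p + sA).
  rewrite exprD exprM mulrA -exprMn.
  apply: ler_pM; rewrite ?exprn_ge0 ?normr_ge0 //.
  by apply: lerXn2r; rewrite ?inE ?nnegrE ?normr_ge0 ?mulr_ge0 ?exprn_ge0.
have e2 : Y ^+ (2 * p + sA) <= Y ^+ (q + N) by exact: ler_wiXn2l.
have e3 : Y ^+ (q + N) <= X ^+ q * Y ^+ N.
  rewrite exprD; apply: ler_wpM2r; first exact: exprn_ge0.
  by apply: lerXn2r; rewrite ?inE ?nnegrE ?rr_ge0.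
have XB : X ^+ q * X^-1 ^+ q = 1 by rewrite -exprMn mulfV ?expr1n // gt_eqF.
have cB : 0 <= c * X^-1 ^+ q by rewrite mulr_ge0 ?normr_ge0 ?exprn_ge0 ?invr_ge0 ?rr_ge0.
have -> : c * `|Af z| ^+ p * X^-1 ^+ q * `|Mono (ta t) z| =
   (c * X^-1 ^+ q) * (`|Af z| ^+ p * `|Mono (ta t) z|) by ring.
apply: (le_trans (ler_wpM2l cB e1)).
apply: (@le_trans _ _ ((c * X^-1 ^+ q) * (9 ^+ p * (X ^+ q * Y ^+ N)))).
  apply: ler_wpM2l => //; apply: ler_wpM2l; first exact: exprn_ge0.
  exact: le_trans e2 e3.
have -> : c * X^-1 ^+ q * (9 ^+ p * (X ^+ q * Y ^+ N)) =
   c * 9 ^+ p * Y ^+ N * (X ^+ q * X^-1 ^+ q) by ring.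
by rewrite XB mulr1.
Qed.


Lemma bound_bdry t y N : (N <= tp t)%N -> Af y = 0 -> cd y ord0 != 0 ->
  exists C : R, \forall z \near y, `|ev t z| <= C * `|z - y| ^+ N.
Proof.
move=> hN Ay y0.
set K := `|y| + 1; set a0 := `|cd y ord0|.
have K0 : 0 < K by rewrite ltr_pwDr // normr_ge0.
have a00 : 0 < a0 by rewrite normr_gt0.
set c := `|tc t|; set p := tp t; set q := tq t; set sA := \sum_(j < 5) ta t j.
set C := c * (12 * K) ^+ p * (2 / a0) ^+ q * K ^+ sA.
have K0' := ltW K0; have a0' := ltW a00.
have C0 : 0 <= C by rewrite /C !mulr_ge0 ?normr_ge0 ?exprn_ge0 ?divr_ge0 ?mulr_ge0.
exists C.
apply/(near_ballP y (fun z => _ <= _)); exists (Num.min 1 (a0 / 2)).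
  by rewrite lt_min ltr01 divr_gt0.
move=> z; rewrite lt_min => /andP[z1 z2].
set n := `|z - y|.
have n0 : 0 <= n := normr_ge0 _.
rewrite /ev; case: ifP => [_|/negbT]; first by rewrite normr0 mulr_ge0 ?exprn_ge0.
rewrite -ltNge => Afz.
have hzy i : `|cd z i - cd y i| <= n by rewrite -coordB; exact: coord_norm.
have hy i : `|cd y i| <= `|y| by exact: coord_norm.
have hz i : `|cd z i| <= K.
  have := ler_normD (cd z i - cd y i) (cd y i); rewrite subrK.
  move=> h; apply: (le_trans h); rewrite /K addrC; apply: lerD => //; exact: ltW (le_lt_trans (hzy i) z1).
have hsq i : `|cd z i ^+ 2 - cd y i ^+ 2| <= n * (2 * K).
  apply: (le_trans (sq_diff _ _)); apply: ler_pM => //; rewrite ?normr_ge0 ?addr_ge0 //.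
  rewrite mulr2n mulrDl mul1r; apply: lerD => //; apply: (le_trans (hy i)).
  by rewrite /K lerDl.
have hA : `|Af z| <= 12 * K * n.
  have -> : Af z = (S z - S y) - (cd z ord0 ^+ 2 - cd y ord0 ^+ 2).
    by rewrite -[Af z]subr0 -Ay /Af; ring.
  apply: (le_trans (ler_normB _ _)).
  have -> : S z - S y = \sum_(i < 5 | i != ord0) (cd z i ^+ 2 - cd y i ^+ 2).
    by rewrite /S sumrB.
  apply: (@le_trans _ _ (\sum_(i < 5) (n * (2 * K)) + n * (2 * K))).
    apply: lerD; last exact: hsq.
    apply: (le_trans (ler_norm_sum _ _ _)).
    rewrite big_mkcond /=; apply: ler_sum => i _.
    case: (i != ord0) => //; rewrite ?mulr_ge0 ?mulr_ge0 // ltW.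
  by rewrite sumr_const card_ord -mulr_natr; lra.
have Xlb : a0 / 2 <= rr z.
  apply: ltW; apply: le_lt_trans (coord0_lt_rr Afz).
  have := ler_normD (cd y ord0 - cd z ord0) (cd z ord0); rewrite subrK -/a0.
  have := hzy ord0; rewrite distrC => h1 h2.
  have : n < a0 / 2 by [].
  lra.
have hB : (rr z)^-1 <= 2 / a0.
  rewrite -[2 / a0]invf_div lef_pV2 ?inE ?posrE ?divr_gt0 //.
  exact: rr_gt0.
have hM : `|Mono (ta t) z| <= K ^+ sA by apply: Mono_bound => //; exact: ltW.
rewrite Et_norm -/c -/p -/q -/sA.
have B0 : 0 <= (rr z)^-1 by rewrite invr_ge0 rr_ge0.
apply: (@le_trans _ _ (C * n ^+ p)).
  rewrite /C.
  have -> : c * (12 * K) ^+ p * (2 / a0) ^+ q * K ^+ sA * n ^+ p =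
     c * (12 * K * n) ^+ p * (2 / a0) ^+ q * K ^+ sA by rewrite !exprMn; ring.
  apply: ler_pM; rewrite ?mulr_ge0 ?normr_ge0 ?exprn_ge0 //.
  apply: ler_pM; rewrite ?mulr_ge0 ?normr_ge0 ?exprn_ge0 //.
    apply: ler_pM; rewrite ?mulr_ge0 ?normr_ge0 ?exprn_ge0 //.
    by apply: lerXn2r; rewrite ?inE ?nnegrE ?normr_ge0 ?mulr_ge0 // ltW.
  by apply: lerXn2r; rewrite ?inE ?nnegrE ?divr_ge0 // ltW.
apply: ler_wpM2l => //; apply: ler_wiXn2l => //; exact: ltW.
Qed.


Lemma near_ev0 t y : Af y < 0 -> \forall z \near y, ev t z = 0.
Proof.
move=> H; have := near_Af_neg H; apply: filterS => z hz.
by rewrite /ev ifT // ltW.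
Qed.

Lemma near_evE t y : 0 < Af y -> \forall z \near y, ev t z = Et t z.
Proof.
move=> H; have := near_Af_pos H; apply: filterS => z hz.
by rewrite /ev ifF //; apply/negbTE; rewrite -ltNge.
Qed.

Lemma ev_bound t y N : (N <= tp t)%N ->
  (tq t + N <= 2 * tp t + \sum_(j < 5) ta t j)%N -> Af y <= 0 ->
  exists C : R, \forall z \near y, `|ev t z| <= C * `|z - y| ^+ N.
Proof.
move=> hN hq; rewrite le_eqVlt => /orP[/eqP Ay|Ay].
  case: (eqVneq (cd y ord0) 0) => y0; last exact: bound_bdry.
  exists (`|tc t| * 9 ^+ tp t); apply: bound_origin => // i.
  case: (eqVneq i ord0) => [->//|i0].
  have S0 : S y = 0 by move: Ay; rewrite /Af y0 expr0n /= subr0.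
  have := @psumr_eq0P _ _ (fun i : 'I_5 => i != ord0) (fun i => cd y i ^+ 2).
  move=> /(_ (fun i _ => sqr_ge0 _) S0 i i0) /eqP.
  by rewrite sqrf_eq0 => /eqP.
exists 0; have := near_ev0 t Ay; apply: filterS => z ->.
by rewrite normr0 mul0r.
Qed.

Lemma evl_nil z : evl [::] z = 0.
Proof. by rewrite /evl big_nil. Qed.

Lemma evl_cons t s z : evl (t :: s) z = ev t z + evl s z.
Proof. by rewrite /evl big_cons. Qed.

Lemma evl_cat s1 s2 z : evl (s1 ++ s2) z = evl s1 z + evl s2 z.
Proof. by rewrite /evl big_cat. Qed.

Lemma evl_L s y : Af y <= 0 -> evl s y = 0.
Proof. by move=> H; rewrite /evl big1 // => t _; rewrite /ev H. Qed.

Lemma evl_Et s y : 0 < Af y -> evl s y = Etl s y.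
Proof.
move=> H; rewrite /evl /Etl; apply: eq_bigr => t _.
by rewrite /ev ifF //; apply/negbTE; rewrite -ltNge.
Qed.

Lemma ev_diff t y k : (2 <= tp t)%N ->
  (tq t + 2 <= 2 * tp t + \sum_(j < 5) ta t j)%N ->
  differentiable (ev t) y /\ 'D_(ebase R k) (ev t) y = evl (dterm k t) y.
Proof.
move=> hp hq; case: (lerP (Af y) 0) => Ay.
  have [C HC] := ev_bound hp hq Ay.
  have ey : ev t y = 0 by rewrite /ev Ay.
  have [D dd] := small_diff ey HC.
  split => //; rewrite evl_L // deriveE // dd //.
have ry := rr_gt0 Ay.
have Hn := near_evE t Ay.
split; first exact: near_eq_diff Hn (dEt t ry).
rewrite (near_eq_derive _ Hn) evl_Et //.
exact: (@derive_val _ _ _ _ _ _ _ (isD_Et t k ry)).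
Qed.

Lemma ev_cont t y : (1 <= tp t)%N ->
  (tq t + 1 <= 2 * tp t + \sum_(j < 5) ta t j)%N -> {for y, continuous (ev t)}.
Proof.
move=> hp hq; case: (lerP (Af y) 0) => Ay.
  have [C HC] := ev_bound hp hq Ay.
  have ey : ev t y = 0 by rewrite /ev Ay.
  apply: (small_cont ey); apply: filterS HC => z; rewrite expr1; apply.
apply: differentiable_continuous.
exact: near_eq_diff (near_evE t Ay) (dEt t (rr_gt0 Ay)).
Qed.


Definition good (P D : nat) (t : term R) :=
  (P <= tp t)%N && (tq t + D <= 2 * tp t + \sum_(j < 5) ta t j)%N.

Lemma sum_incr k a : (\sum_(j < 5) incr k a j = (\sum_(j < 5) a j).+1)%N.
Proof.
rewrite (bigD1 k) //= [in RHS](bigD1 k) //= /incr eqxx addSn; congr (_.+1); congr (_ + _)%N.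
by apply: eq_bigr => j /negbTE ->.
Qed.

Lemma sum_decr k a : ((\sum_(j < 5) decr k a j) + (0 < a k) = \sum_(j < 5) a j)%N.
Proof.
rewrite (bigD1 k) //= [in RHS](bigD1 k) //= /decr eqxx.
rewrite (eq_bigr (fun j => a j)); last by move=> j /negbTE ->.
by case: (a k) => [|n] /=; lia.
Qed.

Lemma good_mono P D P' D' t : good P D t -> (P' <= P)%N -> (D' <= D)%N -> good P' D' t.
Proof. by move=> /andP[h1 h2] h3 h4; apply/andP; split; lia. Qed.

Lemma good_dterm P D k t : good P D t -> (2 <= P)%N -> (1 <= D)%N ->
  all (good P.-1 D.-1) (dterm k t).
Proof.
case: t => c p q a /andP[/= hp hq] P2 D1.
have h1 := sum_incr k a; have h2 := sum_decr k a.
rewrite /= /good /= h1 andbT.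
move: h2; case: (0 < a k)%N => /= h2; apply/and3P; split; apply/andP; split; lia.
Qed.

Definition dl k (s : seq (term R)) := flatten (map (dterm k) s).

Lemma all_flatten' (T : Type) (a : pred T) (ss : seq (seq T)) :
  all a (flatten ss) = all (all a) ss.
Proof. by elim: ss => //= s ss IH; rewrite all_cat IH. Qed.

Lemma evl_diff s y k : all (good 2 2) s ->
  differentiable (evl s) y /\ is_derive y (ebase R k) (evl s) (evl (dl k s) y).
Proof.
elim: s => [|t s IH] /=.
  have -> : evl [::] = fun _ : V => 0 by apply/funext => z; rewrite evl_nil.
  by move=> _; split; [exact: differentiable_cst | exact: is_derive_cst].
move=> /andP[/andP[hp hq] hs]; have [d1 i1] := IH hs.
have [d0 e0] := ev_diff y k hp hq.
have -> : evl (t :: s) = fun z => ev t z + evl s z by apply/funext => z; rewrite evl_cons.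
split; first exact: dD.
rewrite (_ : dl k (t :: s) = dterm k t ++ dl k s) // evl_cat.
apply: isD_add => //.
rewrite -e0; apply: derivableP; exact: diff_derivable.
Qed.

Lemma evl_cont s y : all (good 1 1) s -> {for y, continuous (evl s)}.
Proof.
elim: s => [|t s IH] /=.
  have -> : evl [::] = fun _ : V => 0 by apply/funext => z; rewrite evl_nil.
  by move=> _; exact: cst_continuous.
move=> /andP[/andP[hp hq] hs].
have -> : evl (t :: s) = (ev t + evl s)%R by apply/funext => z; rewrite evl_cons.
apply: continuousD; [exact: ev_cont | exact: IH].
Qed.

Lemma pos_Ck j : forall s P D, all (good P D) s -> (j < P)%N -> (j < D)%N ->
  forall U, Ck j (evl s) U.
Proof.
elim: j => [|j IH] s P D hs hP hD U /=.
  move=> x _; apply: evl_cont; apply: sub_all hs => t ht.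
  apply: (good_mono ht); lia.
have hs2 : all (good 2 2) s.
  by apply: sub_all hs => t ht; apply: (good_mono ht); lia.
split.
  by move=> x _; have [] := evl_diff x ord0 hs2.
move=> i.
have -> : partial i (evl s) = evl (dl i s).
  apply/funext => x; rewrite /partial.
  have [_ H] := evl_diff x i hs2.
  exact: (@derive_val _ _ _ _ _ _ _ H).
apply: (IH _ P.-1 D.-1); [| lia | lia].
rewrite /dl all_flatten' all_map; apply: sub_all hs => t ht /=.
apply: good_dterm => //; lia.
Qed.

End P3.

Section P4.
Variable R : realType.
Notation V := 'rV[R]_5.
Implicit Types x y z : V.
Local Notation cd := (@Defs.coord R).

Lemma Ck_mono j (f : V -> R) U : Ck j.+1 f U -> Ck j f U.
Proof.
elim: j f => [|j IH] f /=.
  by move=> [H _] x Ux; apply: differentiable_continuous; exact: H.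
by move=> [H1 H2]; split => // i; apply: IH; exact: H2.
Qed.

Lemma Ck_le i j (f : V -> R) U : (i <= j)%N -> Ck j f U -> Ck i f U.
Proof.
move=> le; have [n ->] : exists n, j = (n + i)%N by exists (j - i)%N; rewrite subnK.
elim: n => // n IH H; apply: IH; apply: Ck_mono; exact: H.
Qed.

Lemma Ck_iter K (f : V -> R) U (i : 'I_5) : Ck K f U ->
  (forall j, (j < K)%N -> forall x, U x -> differentiable (iter j (partial i) f) x) /\
  (forall x, U x -> {for x, continuous (iter K (partial i) f)}).
Proof.
elim: K f => [|K IH] f /=; first by move=> H; split => //.
move=> [H1 H2]; have [IH1 IH2] := IH _ (H2 i).
split.
  move=> [|j] jK x Ux /=; first exact: H1.
  by rewrite -iterS iterSr; apply: IH1.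
by move=> x Ux; rewrite -iterS iterSr; exact: IH2.
Qed.

Lemma vanish (f : V -> R) (i : 'I_5) j : (forall x, Af x < 0 -> f x = 0) ->
  forall x, Af x < 0 -> iter j (partial i) f x = 0.
Proof.
move=> H0; elim: j => [|j IH] x hx //=; first exact: H0.
rewrite /partial.
have E : \forall z \near x, iter j (partial i) f z = (fun _ : V => (0 : R)) z.
  by have := near_Af_neg hx; apply: filterS => z hz; exact: IH.
by rewrite (near_eq_derive _ E) derive_cst.
Qed.

Lemma line_derive (h : V -> R) (v p : V) (t : R) :
  differentiable h (t *: v + p) ->
  is_derive t 1 (fun s : R => h (s *: v + p)) ('D_v h (t *: v + p)).
Proof.
move=> dh.
have E : (fun u : R => u^-1 *: (((fun s : R => h (s *: v + p)) \o shift t) (u *: 1)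
            - (fun s : R => h (s *: v + p)) t)) =
         (fun u : R => u^-1 *: ((h \o shift (t *: v + p)) (u *: v) - h (t *: v + p))).
  apply/funext => u /=; congr (_ *: (h _ - _)).
  by rewrite [_%:A]mulr1 scalerDl addrA.
have dv : derivable h (t *: v + p) v by exact: diff_derivable.
apply: DeriveDef.
  by rewrite /derivable E.
by rewrite /derive E.
Qed.


Lemma taylor (psi : nat -> R -> R) K (A B M : R) : A < B ->
  (forall j, (j < K)%N -> forall u, A <= u <= B -> is_derive u 1 (psi j) (psi j.+1 u)) ->
  (forall j, (j < K)%N -> psi j A = 0) ->
  (forall u, A <= u <= B -> `|psi K u| <= M) ->
  `|psi 0%N B| <= M * (B - A) ^+ K.
Proof.
move=> AB Hd H0 HM.
have M0 : 0 <= M by apply: le_trans (HM A _); rewrite ?normr_ge0 // lexx ltW.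
suff G : forall i, (i <= K)%N -> forall u, A <= u <= B ->
    `|psi (K - i)%N u| <= M * (u - A) ^+ i.
  by have := G K (leqnn K) B; rewrite subnn; apply; rewrite lexx ltW.
elim => [|i IH] iK u /andP[Ax xB].
  by rewrite subn0 expr0 mulr1; apply: HM; rewrite Ax.
set j := (K - i.+1)%N.
have jK : (j < K)%N by rewrite /j; lia.
have ji : (j.+1 = K - i)%N by rewrite /j; lia.
case: (eqVneq u A) => [->|xA].
  by rewrite H0 // normr0 subrr expr0n /= mulr0.
have Ax' : A < u by rewrite lt_neqAle eq_sym xA Ax.
have [c c_in E] : exists2 c, c \in `]A, u[ & psi j u - psi j A = psi j.+1 c * (u - A).
  apply: MVT => //.
    move=> y; rewrite in_itv /= => /andP[y1 y2]; apply: Hd => //.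
    by rewrite (ltW y1) (le_trans (ltW y2) xB).
  apply: derivable_within_continuous => y; rewrite in_itv /= => /andP[y1 y2].
  have [] := Hd j jK y _; first by rewrite y1 (le_trans y2 xB).
  done.
move: E; rewrite H0 // subr0 => ->.
move: c_in; rewrite in_itv /= => /andP[c1 c2].
rewrite normrM (ger0_norm (x := u - A)) ?subr_ge0 //.
have := IH (ltnW iK) c; rewrite -ji => H.
have {}H : `|psi j.+1 c| <= M * (c - A) ^+ i.
  by apply: H; rewrite (ltW c1) (le_trans (ltW c2) xB).
apply: (le_trans (ler_wpM2r _ H)); first by rewrite subr_ge0.
rewrite exprSr mulrA; apply: ler_wpM2r; first by rewrite subr_ge0.
apply: ler_wpM2l => //; apply: lerXn2r; rewrite ?inE ?nnegrE ?subr_ge0 ?(ltW c1) //.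
by apply: lerB => //; exact: ltW.
Qed.


Lemma obstruct (f : V -> R) (U : set V) (i : 'I_5) K (Z : V) (G : R) :
  (forall x, Af x < 0 -> f x = 0) -> Ck K f U -> U Z -> 0 < G ->
  (forall d : R, 0 < d -> exists W : V, `|W - Z| < d /\ Af W < 0) ->
  (forall d : R, 0 < d -> exists (p : V) (A B : R), [/\ A < B,
      (forall t, A <= t <= B -> U (t *: ebase R i + p) /\ `|t *: ebase R i + p - Z| < d),
      Af (A *: ebase R i + p) < 0 &
      G * (B - A) ^+ K <= `|f (B *: ebase R i + p)|]) -> False.
Proof.
move=> H0 HC UZ G0 Hnear Hseg.
have [Hd Hc] := Ck_iter i HC.
have cK := Hc Z UZ.
have e0 : 0 < G / 4 by rewrite divr_gt0.
move/(cvgrPdist_lt (FF := nbhs_filter Z)) : cK => /(_ _ e0) /near_ballP [d d0 Hdd].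
have [W [WZ AW]] := Hnear d d0.
have hW : iter K (partial i) f W = 0 by exact: vanish.
have hZ : `|iter K (partial i) f Z| < G / 4.
  by have := Hdd W WZ; rewrite hW subr0.
have [p [A [B [AB Hin HA HB]]]] := Hseg d d0.
pose psi j (t : R) := iter j (partial i) f (t *: ebase R i + p).
have T := @taylor psi K A B (G / 2) AB.
have T2 : `|psi 0%N B| <= G / 2 * (B - A) ^+ K.
  apply: T.
  - move=> j jK t tAB; have [Ut _] := Hin t tAB.
    have dj := Hd j jK _ Ut.
    exact: (line_derive dj).
  - by move=> j jK; rewrite /psi; apply: vanish.
  - move=> t tAB; have [_ tZ] := Hin t tAB.
    have := Hdd _ tZ; rewrite /psi => h1.
    have := ler_normD (iter K (partial i) f Z)
      (iter K (partial i) f (t *: ebase R i + p) - iter K (partial i) f Z).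
    rewrite addrC subrK => h2; apply: (le_trans h2).
    rewrite distrC in h1; lra.
have P0 : 0 < (B - A) ^+ K by rewrite exprn_gt0 // subr_gt0.
have := le_trans HB T2; rewrite /psi /= ler_pM2r // => h.
lra.
Qed.

End P4.

Section P5.
Variable R : realType.
Notation V := 'rV[R]_5.
Implicit Types x y z : V.
Local Notation cd := (@Defs.coord R).

Definition o1 : 'I_5 := lift ord0 ord0.
Definition o2 : 'I_5 := lift ord0 (lift ord0 ord0).
Definition o3 : 'I_5 := lift ord0 (lift ord0 (lift ord0 ord0)).
Definition o4 : 'I_5 := lift ord0 (lift ord0 (lift ord0 (lift ord0 (ord0 : 'I_1)))).

Lemma S_expand z : S z = cd z o1 ^+ 2 + cd z o2 ^+ 2 + cd z o3 ^+ 2 + cd z o4 ^+ 2.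
Proof. by rewrite /S big_mkcond !big_ord_recl big_ord0 /= add0r addr0 !addrA. Qed.

Definition vec5 (a0 a1 a2 a3 a4 : R) : V := \row_(j < 5) nth 0 [:: a0; a1; a2; a3; a4] j.

Lemma cd_line5 (t c a0 a1 a2 a3 a4 : R) :
  let z := t *: ebase R o1 + c *: vec5 a0 a1 a2 a3 a4 in
  [/\ cd z ord0 = c * a0, cd z o1 = t + c * a1, cd z o2 = c * a2,
      cd z o3 = c * a3 & cd z o4 = c * a4].
Proof.
by rewrite /= !coordD !coordZ !coord_ebase /Defs.coord !mxE /=; split; ring.
Qed.


Lemma Af_line5 (t c a0 a1 a2 a3 a4 : R) :
  Af (t *: ebase R o1 + c *: vec5 a0 a1 a2 a3 a4) =
  (t + c * a1) ^+ 2 + (c * a2) ^+ 2 + (c * a3) ^+ 2 + (c * a4) ^+ 2 - (c * a0) ^+ 2.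
Proof.
have [h0 h1 h2 h3 h4] := cd_line5 t c a0 a1 a2 a3 a4.
by rewrite /Af S_expand h0 h1 h2 h3 h4.
Qed.

Lemma norm_ebase i : `|ebase R i| <= 1.
Proof.
apply: norm_le => // j; rewrite coord_ebase.
by case: (i == j); rewrite ?normr1 ?normr0.
Qed.

Lemma norm_vec5 (a0 a1 a2 a3 a4 B : R) : 0 <= B ->
  `|a0| <= B -> `|a1| <= B -> `|a2| <= B -> `|a3| <= B -> `|a4| <= B ->
  `|vec5 a0 a1 a2 a3 a4| <= B.
Proof.
move=> B0 h0 h1 h2 h3 h4; apply: norm_le => // j.
rewrite /Defs.coord mxE.
by case: j => [[|[|[|[|[|k]]]]] Hk] //=.
Qed.

Lemma rr_le_norm z : rr z <= 3 * `|z|.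
Proof.
have n0 := normr_ge0 z.
apply: sq_le; rewrite ?rr_ge0 ?mulr_ge0 //.
rewrite rr_sqr; apply: (le_trans (S_le_sum z)).
apply: (@le_trans _ _ (\sum_(i < 5) `|z| ^+ 2)).
  apply: ler_sum => i _; rewrite -real_normK ?num_real //.
  by apply: lerXn2r; rewrite ?inE ?nnegrE ?normr_ge0 ?coord_norm.
rewrite sumr_const card_ord -mulr_natr; nra.
Qed.

Lemma Bt_of_rr (a : R) z : 0 < a -> rr z < a^-1 -> Bt a z.
Proof.
move=> a0 hr; case: (lerP (Af z) 0) => Az.
  by right; rewrite /Lcone /= inLE.
left; rewrite /Ba /ro /= inLE ifF; last by apply/negbTE; rewrite -ltNge.
have r0 := rr_gt0 Az.
rewrite rr_sqr -/(Af z) divr_gt0 //=.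
apply: le_lt_trans hr; rewrite ler_pdivrMr //.
rewrite -expr2 rr_sqr /Af; have := sqr_ge0 (cd z ord0); lra.
Qed.

Lemma Mono_lower a z (B : R) : 0 <= B -> (forall j, B <= cd z j) ->
  B ^+ (\sum_(j < 5) a j) <= Mono a z.
Proof.
move=> B0 H; rewrite /Mono -prodrXr; apply: ler_prod => j _.
rewrite exprn_ge0 //=; apply: lerXn2r; rewrite ?inE ?nnegrE //.
  exact: le_trans (H j).
Qed.

Lemma Et_lower t z (a0 r0 mu : R) : 0 < Af z -> 0 <= a0 <= Af z -> rr z <= r0 ->
  0 <= mu <= Mono (ta t) z -> tc t = 1 ->
  a0 ^+ tp t * r0^-1 ^+ tq t * mu <= Et t z.
Proof.
move=> Az /andP[a00 a0A] rr0 /andP[mu0 muM] c1.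
have r0p : 0 < rr z := rr_gt0 Az.
have r00 : 0 < r0 := lt_le_trans r0p rr0.
rewrite /Et c1 mul1r.
apply: ler_pM; rewrite ?mulr_ge0 ?exprn_ge0 ?invr_ge0 ?(ltW r00) //.
apply: ler_pM; rewrite ?exprn_ge0 ?invr_ge0 ?(ltW r00) //.
  by apply: lerXn2r; rewrite ?inE ?nnegrE // (le_trans a00 a0A).
apply: lerXn2r; rewrite ?inE ?nnegrE ?invr_ge0 ?rr_ge0 ?(ltW r00) //.
by rewrite lef_pV2 ?inE ?posrE.
Qed.

Lemma gml_evl m lr l : gml m lr l = evl [:: Term (1 : R) m (m + lr) l].
Proof.
apply/funext => x; rewrite evl_cons evl_nil addr0 /gml /ev /Et /= inLE.
case: ifP => // Ax.
rewrite /ro inLE Ax rr_sqr -/(Af x) /fl -/(Mono l x) -exprVn exprD.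
rewrite exprMn; ring.
Qed.

Lemma gml_vanish m lr l x : Af x < 0 -> gml m lr l x = 0.
Proof. by move=> H; rewrite /gml inLE ltW. Qed.


Lemma cd_line5_j (t c a0 a1 a2 a3 a4 : R) (j : 'I_5) :
  cd (t *: ebase R o1 + c *: vec5 a0 a1 a2 a3 a4) j =
  t * (1 == val j)%:R + c * nth 0 [:: a0; a1; a2; a3; a4] j.
Proof. by rewrite coordD !coordZ coord_ebase /Defs.coord mxE. Qed.

Lemma norm_line5 (t c a0 a1 a2 a3 a4 B : R) : 0 <= c -> 0 <= B ->
  `|a0| <= B -> `|a1| <= B -> `|a2| <= B -> `|a3| <= B -> `|a4| <= B ->
  `|t *: ebase R o1 + c *: vec5 a0 a1 a2 a3 a4| <= `|t| + c * B.
Proof.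
move=> c0 B0 h0 h1 h2 h3 h4.
apply: (le_trans (ler_normD _ _)); rewrite !normrZ (ger0_norm c0).
apply: lerD.
  by rewrite -[X in _ <= X]mulr1; apply: ler_wpM2l; [exact: normr_ge0 | exact: norm_ebase].
by apply: ler_wpM2l => //; exact: norm_vec5.
Qed.


Lemma obs_bdry (a : R) m lr l : 0 < a -> ~ Ck m (gml m lr l) (Bt a).
Proof.
move=> a0 HC.
set c : R := Num.min 1 (10 * a)^-1.
have ia : 0 < a^-1 by rewrite invr_gt0.
have c0 : 0 < c by rewrite /c lt_min ltr01 invr_gt0 mulr_gt0.
have c1 : c <= 1 by rewrite /c ge_min lexx.
have cle : c <= (10 * a)^-1 by rewrite /c ge_min lexx orbT.
have ca : 9 * c < a^-1.
  move: cle; rewrite invfM => cle.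
  have : 10^-1 * a^-1 = a^-1 / 10 by rewrite mulrC.
  move=> e; rewrite e in cle; lra.
set Z : V := c *: vec5 2 1 1 1 1.
pose L (t : R) : V := t *: ebase R o1 + Z.
have AfL t : Af (L t) = t ^+ 2 + 2 * t * c by rewrite /L /Z Af_line5; ring.
have rrL t : `|t| <= c -> rr (L t) <= 9 * c.
  move=> tc; apply: (le_trans (rr_le_norm _)).
  have n2 : `|2 : R| <= 2 by rewrite ger0_norm.
  have n1 : `|1 : R| <= 2 by rewrite normr1 ler1n.
  have H : `|L t| <= `|t| + c * 2 := norm_line5 t (ltW c0) (ler0n _ 2) n2 n1 n1 n1 n1.
  lra.
have UL t : `|t| <= c -> Bt a (L t).
  by move=> tc; apply: Bt_of_rr => //; apply: le_lt_trans (rrL t tc) ca.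
have LZ : L 0 = Z by rewrite /L scale0r add0r.
have LmZ t : `|L t - Z| <= `|t|.
  rewrite /L addrK normrZ -[X in _ <= X]mulr1; apply: ler_wpM2l; first exact: normr_ge0.
  exact: norm_ebase.
set G0 : R := (2 * c) ^+ m * (9 * c)^-1 ^+ (m + lr) * c ^+ (\sum_(j < 5) l j).
set G : R := G0 / 2 ^+ m.
have G0p : 0 < G0 by rewrite /G0 !mulr_gt0 ?exprn_gt0 ?invr_gt0 ?mulr_gt0.
have Gp : 0 < G by rewrite /G divr_gt0 // exprn_gt0.
apply: (obstruct (i := o1) (Z := Z) (gml_vanish m lr l) HC _ Gp).
- by rewrite -LZ; apply: UL; rewrite normr0 ltW.
- move=> d d0; set mu := Num.min c d.
  have mu0 : 0 < mu by rewrite /mu lt_min c0 d0.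
  have muc : mu <= c by rewrite /mu ge_min lexx.
  have mud : mu <= d by rewrite /mu ge_min lexx orbT.
  exists (L (- mu / 2)); split.
    apply: le_lt_trans (LmZ _) _; rewrite normrM normrN normfV !gtr0_norm //; lra.
  rewrite AfL; nra.
- move=> d d0; set tau := Num.min c (d / 2).
  have tau0 : 0 < tau by rewrite /tau lt_min c0 divr_gt0.
  have tauc : tau <= c by rewrite /tau ge_min lexx.
  have taud : tau <= d / 2 by rewrite /tau ge_min lexx orbT.
  exists Z, (- tau), tau; split.
  + lra.
  + move=> t /andP[t1 t2]; have tt : `|t| <= tau by rewrite ler_norml t1 t2.
    split; first by apply: UL; lra.
    apply: le_lt_trans (LmZ t) _; lra.
  + rewrite -/(L (- tau)) AfL; nra.
  + rewrite -/(L tau) gml_evl evl_cons evl_nil addr0.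
    have AL : 0 < Af (L tau) by rewrite AfL; nra.
    rewrite /ev ifF; last by apply/negbTE; rewrite -ltNge.
    have H := @Et_lower (Term 1 m (m + lr) l) (L tau) (2 * c * tau) (9 * c) (c ^+ (\sum_(j < 5) l j)) AL.
    have {}H := H _ (rrL tau _) _ erefl.
    have E1 : G * (tau - - tau) ^+ m = (2 * c * tau) ^+ m * (9 * c)^-1 ^+ (m + lr) * c ^+ (\sum_(j < 5) l j).
      have -> : tau - - tau = 2 * tau by ring.
      rewrite exprMn /G mulrA divfK ?expf_neq0 // /G0 [(2 * c * tau) ^+ m]exprMn; ring.
    rewrite E1; apply: le_trans (ler_norm _); apply: H.
    * by rewrite AfL mulr_ge0 ?mulr_ge0 ?(ltW c0) ?(ltW tau0) //=; nra.
    * by rewrite ger0_norm ?(ltW tau0).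
    * rewrite exprn_ge0 ?(ltW c0) //=; apply: Mono_lower; first exact: ltW.
      move=> j; rewrite cd_line5_j.
      by case: j => [[|[|[|[|[|k]]]]] Hk] //=; lra.
Qed.


Lemma obs_origin (a : R) m lr l K : 0 < a ->
  (2 * m + \sum_(j < 5) l j <= K + m + lr)%N -> ~ Ck K (gml m lr l) (Bt a).
Proof.
move=> a0 hK HC.
have ia : 0 < a^-1 by rewrite invr_gt0.
set G : R := (12 : R)^-1 ^+ (m + lr) / 2 ^+ K.
have Gp : 0 < G by rewrite /G divr_gt0 ?exprn_gt0 ?invr_gt0.
apply: (obstruct (i := o1) (Z := 0) (gml_vanish m lr l) HC _ Gp).
- apply: Bt_of_rr => //; apply: le_lt_trans (rr_le_norm 0) _.
  by rewrite normr0 mulr0.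
- move=> d d0; exists ((d / 2) *: ebase R ord0); split.
    rewrite subr0 normrZ; apply: le_lt_trans (ler_wpM2l (normr_ge0 _) (norm_ebase _)) _.
    rewrite mulr1 ger0_norm ?divr_ge0 ?(ltW d0) //; lra.
  rewrite /Af S_expand !coordZ !coord_ebase /= !mulr0 expr0n /= !addr0 mulr1.
  by rewrite sub0r oppr_lt0 exprn_gt0 // divr_gt0.
- move=> d d0.
  set c : R := Num.min 1 (Num.min (d / 8) (20 * a)^-1).
  have c0 : 0 < c by rewrite /c !lt_min ltr01 divr_gt0 ?invr_gt0 ?mulr_gt0.
  have c1 : c <= 1 by rewrite /c ge_min lexx.
  have cd8 : c <= d / 8 by rewrite /c !ge_min lexx orbT.
  have cle : c <= (20 * a)^-1 by rewrite /c !ge_min lexx !orbT.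
  have ca : 12 * c < a^-1.
    move: cle; rewrite invfM => cle.
    have e : 20^-1 * a^-1 = a^-1 / 20 by rewrite mulrC.
    rewrite e in cle; lra.
  set p : V := c *: vec5 2 0 1 1 1.
  pose L (t : R) : V := t *: ebase R o1 + p.
  have AfL t : Af (L t) = t ^+ 2 - c ^+ 2 by rewrite /L /p Af_line5; ring.
  have nL t : `|t| <= 2 * c -> `|L t| <= 4 * c.
    move=> tc.
    have n2 : `|2 : R| <= 2 by rewrite ger0_norm.
    have n1 : `|1 : R| <= 2 by rewrite normr1 ler1n.
    have n0 : `|0 : R| <= 2 by rewrite normr0.
    have H : `|L t| <= `|t| + c * 2 := norm_line5 t (ltW c0) (ler0n _ 2) n2 n0 n1 n1 n1.
    lra.
  have rrL t : `|t| <= 2 * c -> rr (L t) <= 12 * c.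
    by move=> tc; apply: (le_trans (rr_le_norm _)); have := nL t tc; lra.
  exists p, 0, (2 * c); split.
  + by rewrite mulr_gt0.
  + move=> t /andP[t1 t2]; have tt : `|t| <= 2 * c by rewrite ger0_norm.
    split.
      by apply: Bt_of_rr => //; apply: le_lt_trans (rrL t tt) ca.
    by rewrite subr0; apply: le_lt_trans (nL t tt) _; lra.
  + by rewrite -/(L 0) AfL expr0n /= sub0r oppr_lt0 exprn_gt0.
  + rewrite -/(L (2 * c)) gml_evl evl_cons evl_nil addr0.
    have AL : 0 < Af (L (2 * c)) by rewrite AfL; nra.
    rewrite /ev ifF; last by apply/negbTE; rewrite -ltNge.
    have tt : `|2 * c| <= 2 * c by rewrite ger0_norm ?mulr_ge0 ?(ltW c0).
    have H := @Et_lower (Term 1 m (m + lr) l) (L (2 * c)) (c ^+ 2) (12 * c)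
       (c ^+ (\sum_(j < 5) l j)) AL.
    have {}H := H _ (rrL _ tt) _ erefl.
    apply: le_trans (ler_norm _); apply: le_trans (H _ _).
    * rewrite /= subr0.
      set sl := (\sum_(j < 5) l j)%N.
      have h := ler_wiXn2l (ltW c0) c1 hK.
      rewrite -addnA exprD in h.
      have ci : c ^+ (m + lr) * c^-1 ^+ (m + lr) = 1.
        by rewrite -exprMn mulfV ?expr1n // gt_eqF.
      have e1 : G * (2 * c) ^+ K = (12 : R)^-1 ^+ (m + lr) * (c ^+ K * (c ^+ (m + lr) * c^-1 ^+ (m + lr))).
        rewrite ci mulr1 /G exprMn mulrA divfK ?expf_neq0 //.
      have e2 : (c ^+ 2) ^+ m * (12 * c)^-1 ^+ (m + lr) * c ^+ sl =
          (12 : R)^-1 ^+ (m + lr) * (c ^+ (2 * m + sl) * c^-1 ^+ (m + lr)).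
        rewrite [c ^+ (2 * m + sl)]exprD [c ^+ (2 * m)]exprM invfM exprMn.
        set A1 := (12 : R)^-1 ^+ (m + lr); set A2 := c^-1 ^+ (m + lr).
        rewrite [(_ / c) ^+ _]exprMn -/A1 -/A2.
        set A3 := c ^+ m; ring.
      rewrite e1 e2; apply: ler_wpM2l; first by rewrite exprn_ge0 // invr_ge0.
      rewrite mulrA; apply: ler_wpM2r; first by rewrite exprn_ge0 // invr_ge0 ltW.
      exact: h.
    * rewrite AfL exprn_ge0 ?(ltW c0) //=; nra.
    * rewrite exprn_ge0 ?(ltW c0) //=; apply: Mono_lower; first exact: ltW.
      move=> j; rewrite cd_line5_j.
      by case: j => [[|[|[|[|[|k]]]]] Hk] //=; lra.
Qed.

End P5.

Local Close Scope classical_set_scope.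

Theorem lemma2 (R : realType) (a : R) (m lr : nat) (l : 'I_5 -> nat) :
  0 < a -> (0 < m)%N ->
  let k : int := Num.min (m%:Z) (m%:Z + sl lr l) in
  (forall j : nat, j%:Z < k -> Ck j (gml m lr l) (Bt a)) /\
  (forall j : nat, k <= j%:Z -> ~ Ck j (gml m lr l) (Bt a)).
Proof.
move=> a0 m0 k.
set s := (\sum_(i < 5) l i)%N.
have hsl : sl lr l = s%:Z - lr%:Z.
  rewrite /sl addrC; congr (_ - _).
  by apply/esym; apply: (big_morph Posz PoszD).
split.
- move=> j jk; rewrite gml_evl.
  move: jk; rewrite /k lt_min hsl => /andP[j1 j2].
  apply: (@pos_Ck R j _ m j.+1); rewrite // ?(ltnn) /=.
  + rewrite andbT /good /=; apply/andP; split; first by [].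
    rewrite -/s; lia.
- move=> j; rewrite /k ge_min hsl => /orP[j1|j2] HC.
    apply: (obs_bdry (m := m) (lr := lr) (l := l) a0).
    apply: Ck_le HC; lia.
  apply: (obs_origin (m := m) (lr := lr) (l := l) (K := (2 * m + s - (m + lr))%N) a0).
    rewrite -/s; lia.
  apply: Ck_le HC; lia.
Qed.
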